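(* Assume the Standing Setup. Let $n\ge1$, let $\vec A$ be a time-dependent vector field in $\mathcal F$ which is $n$-admissible for $\mathcal G$, let $\vec\Delta\in H^0(X,\mathcal F)$ with $\vec\Delta|_Y\in H^0(Y,\mathcal G)$, and let $\vec E\in H^0(X,\mathcal F)$ be any time-independent vector field. Set $\vec B:=\vec A+\frac{t^n}{n!}\vec\Delta+\frac{t^{n+1}}{(n+1)!}\vec E$. Then for all $1\le m\le n$, $$\mathcal L^m_{D(\vec B)}\vec B\equiv \mathcal L^m_{D(\vec A)}\vec A+\tfrac{t^{n-m}}{(n-m)!}\vec\Delta \pmod{t^{n-m+1}},$$ and $$\mathcal L^{n+1}_{D(\vec B)}\vec B\equiv\mathcal L^{n+1}_{D(\vec A)}\vec A+\vec E+n[\vec A,\vec\Delta]\pmod{t}.$$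
   Context: Standing Setup: $X$ is a complex manifold, $\mathcal F\subseteq T_X$ a Lie-closed subsheaf of $\mathbb C_X$-modules ($\mathbb C_X$ = locally constant functions), $Y\subseteq X$ a reduced complex subspace with inclusion $f$, $\mathcal F_Y:=\operatorname{Im}(f^{-1}\mathcal F\to f^*T_X)$, $\mathcal G\subseteq\mathcal F_Y$ an obstruction sheaf for $\mathcal F$ (for every open $U\subseteq X$ and $\vec A_1,\vec A_2\in\mathcal F(U)$ with $f^*\vec A_1=f^*\vec A_2$ on $f^{-1}(U)$, $f^*[\vec A_1,\vec A_2]\in\mathcal G(f^{-1}(U))$). A time-dependent vector field is a section of $p_X^*T_X$ over $X\times\mathbb C$ ($t$ the coordinate of $\mathbb C$, $p_X$ the projection), viewed inside $T_{X\times\mathbb C}$; it is in $\mathcal F$ if it equals $\sum_{i=0}^N t^i\vec A_i$ with $\vec A_i\in H^0(X,\mathcal F)$; time-independent fields on $X$ are regarded as time-dependent via pull-back. $\vec A_0|_Y$ denotes the image in $H^0(Y,f^*T_X)$ of the restriction to time $0$. $D(\vec A):=\partial/\partial t+\vec A$, $\mathcal L_{\vec V}\vec W:=[\vec V,\vec W]$ on $X\times\mathbb C$, $\mathcal L^m$ its $m$-fold iterate. $\vec A$ is $n$-admissible for $\mathcal G$ if $(\mathcal L^m_{D(\vec A)}\vec A)_0|_Y\in H^0(Y,\mathcal G)$ for $1\le m\le n$. For time-dependent fields $\vec V,\vec W$, $\vec V\equiv\vec W\pmod{t^k}$ means $\vec V-\vec W=t^k\vec U$ for some time-dependent vector field $\vec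 U$. *)

(* Defs.v *)
From HB Require Import structures.
From mathcomp Require Import all_boot all_order all_algebra.
Set Implicit Arguments. Unset Strict Implicit. Unset Printing Implicit Defensive.
Import GRing.Theory.
Local Open Scope ring_scope.

(* br is a K-bilinear Lie bracket on L (here L models H^0(X,F), which is a
   Lie algebra over the constants since F is Lie-closed). *)
Definition lie_bracket (K : fieldType) (L : lmodType K) (br : L -> L -> L) : Prop :=
  [/\ forall (a : K) x y z, br (a *: x + y) z = a *: br x z + br y z,
      forall (a : K) x y z, br x (a *: y + z) = a *: br x y + br x z,
      forall x, br x x = 0 &
      forall x y z, br x (br y z) + br y (br z x) + br z (br x y) = 0].

(* A time-dependent vector field "in F" is sum_i t^i V_i with V_i in L;
   we represent it by its coefficient sequence V : nat -> L (V i = coeff of t^i). *)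
Definition tdvf_in_F (K : fieldType) (L : lmodType K) (V : nat -> L) : Prop :=
  exists N : nat, forall i : nat, (N < i)%N -> V i = 0.

Definition tconst (K : fieldType) (L : lmodType K) (D : L) : nat -> L :=
  fun i => if i == 0%N then D else 0.

Definition tmono (K : fieldType) (L : lmodType K) (n : nat) (D : L) : nat -> L :=
  fun i => if i == n then ((n`!)%:R : K)^-1 *: D else 0.

Definition tderiv (K : fieldType) (L : lmodType K) (V : nat -> L) : nat -> L :=
  fun i => V i.+1 *+ i.+1.

Definition tbr (K : fieldType) (L : lmodType K) (br : L -> L -> L)
  (V W : nat -> L) : nat -> L :=
  fun k => \sum_(i < k.+1) br (V i) (W (k - i)%N).

(* L_{D(A)} W = [d/dt + A, W] = dW/dt + [A, W] *)
Definition LieD (K : fieldType) (L : lmodType K) (br : L -> L -> L)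
  (A W : nat -> L) : nat -> L :=
  fun k => tderiv W k + tbr br A W k.

Definition LieIter (K : fieldType) (L : lmodType K) (br : L -> L -> L)
  (A : nat -> L) (m : nat) : nat -> L :=
  iter m (LieD br A) A.

Definition eqmod_t (K : fieldType) (L : lmodType K) (k : nat) (V W : nat -> L) : Prop :=
  forall i : nat, (i < k)%N -> V i = W i.

(* res models restriction H^0(X,F) -> H^0(Y, f^* T_X); G models H^0(Y,G). *)
Definition obstruction (K : fieldType) (L M : lmodType K) (br : L -> L -> L)
  (res : L -> M) (G : pred M) : Prop :=
  forall A1 A2 : L, res A1 = res A2 -> G (res (br A1 A2)).

Definition admissible (K : fieldType) (L M : lmodType K) (br : L -> L -> L)
  (res : L -> M) (G : pred M) (n : nat) (A : nat -> L) : Prop :=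
  forall m : nat, (1 <= m <= n)%N -> G (res (LieIter br A m 0%N)).

(* Main.v *)
Require Import Defs.
From HB Require Import structures.
From mathcomp Require Import all_boot all_order all_algebra.
From mathcomp Require Import zify.
Import GRing.Theory.
Local Open Scope ring_scope.
Set Implicit Arguments. Unset Strict Implicit.

Definition mono (K : fieldType) (L : lmodType K) (d : nat) (x : L) : nat -> L :=
  fun i => if i == d then x else 0.

Lemma brDl (K : fieldType) (L : lmodType K) (br : L -> L -> L) (hbr : lie_bracket br) x y z :
  br (x + y) z = br x z + br y z.
Proof. case: hbr => h1 _ _ _; by have := h1 1 x y z; rewrite !scale1r. Qed.
Lemma brDr (K : fieldType) (L : lmodType K) (br : L -> L -> L) (hbr : lie_bracket br) x y z :
  br x (y + z) = br x y + br x z.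
Proof. case: hbr => _ h1 _ _; by have := h1 1 x y z; rewrite !scale1r. Qed.
Lemma br0l (K : fieldType) (L : lmodType K) (br : L -> L -> L) (hbr : lie_bracket br) z :
  br 0 z = 0.
Proof. apply: (addrI (br 0 z)); by rewrite -(brDl hbr) !addr0. Qed.
Lemma br0r (K : fieldType) (L : lmodType K) (br : L -> L -> L) (hbr : lie_bracket br) z :
  br z 0 = 0.
Proof. apply: (addrI (br z 0)); by rewrite -(brDr hbr) !addr0. Qed.
Lemma brZr (K : fieldType) (L : lmodType K) (br : L -> L -> L) (hbr : lie_bracket br) a x z :
  br z (a *: x) = a *: br z x.
Proof. have := hbr; case=> _ h1 _ _; by have := h1 a z x 0; rewrite !addr0 (br0r hbr) addr0. Qed.
Lemma br_anti (K : fieldType) (L : lmodType K) (br : L -> L -> L) (hbr : lie_bracket br) x y :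
  br x y + br y x = 0.
Proof. have := hbr; case=> _ _ h3 _; have := h3 (x + y).
by rewrite (brDl hbr) !(brDr hbr) !h3 add0r addr0. Qed.

Lemma tbr_ext (K : fieldType) (L : lmodType K) (br : L -> L -> L) V V' W W' k :
  (forall j, (j <= k)%N -> V j = V' j) -> (forall j, (j <= k)%N -> W j = W' j) ->
  tbr br V W k = tbr br V' W' k.
Proof.
move=> hV hW; rewrite /tbr; apply: eq_bigr => [[i hi]] _ /=.
by rewrite hV ?hW // leq_subr.
Qed.

Lemma tbrDl (K : fieldType) (L : lmodType K) (br : L -> L -> L) (hbr : lie_bracket br) V W U k :
  tbr br (fun j => V j + W j) U k = tbr br V U k + tbr br W U k.
Proof. rewrite /tbr -big_split; apply: eq_bigr => i _; exact: brDl. Qed.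
Lemma tbrDr (K : fieldType) (L : lmodType K) (br : L -> L -> L) (hbr : lie_bracket br) V W U k :
  tbr br U (fun j => V j + W j) k = tbr br U V k + tbr br U W k.
Proof. rewrite /tbr -big_split; apply: eq_bigr => i _; exact: brDr. Qed.

Lemma tbr_monol (K : fieldType) (L : lmodType K) (br : L -> L -> L) (hbr : lie_bracket br) d x W k :
  tbr br (mono d x) W k = if (d <= k)%N then br x (W (k - d)%N) else 0.
Proof.
rewrite /tbr (eq_bigr (fun i : 'I_k.+1 => if nat_of_ord i == d then br x (W (k - i)%N) else 0)).
  by rewrite -big_mkcond (big_ord1_eq _ (fun j => br x (W (k - j)%N))) ltnS.
move=> i _; rewrite /mono; case: eqP => //; by rewrite (br0l hbr).
Qed.

Lemma tbr_monor (K : fieldType) (L : lmodType K) (br : L -> L -> L) (hbr : lie_bracket br) d x V k :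
  tbr br V (mono d x) k = if (d <= k)%N then br (V (k - d)%N) x else 0.
Proof.
rewrite /tbr (reindex_inj rev_ord_inj) /=.
rewrite (eq_bigr (fun i : 'I_k.+1 => if nat_of_ord i == d then br (V (k - i)%N) x else 0)).
  by rewrite -big_mkcond (big_ord1_eq _ (fun j => br (V (k - j)%N) x)) ltnS.
move=> [i hi] _ /=; rewrite subSS subKn // /mono; case: eqP => //; by rewrite (br0r hbr).
Qed.

Lemma fact_step (K : fieldType) (L : lmodType K) (hK : [pchar K] =i pred0) k (v : L) :
  ((k.+1)`!%:R : K)^-1 *: v *+ k.+1 = ((k`!)%:R : K)^-1 *: v.
Proof.
have nz : forall j, ((j.+1)%:R : K) != 0 by move=> j; rewrite (pcharf0P _).1.
have nzf : forall j, ((j`!)%:R : K) != 0.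
  move=> j; rewrite (pcharf0P _).1 // -lt0n; exact: fact_gt0.
rewrite -scaler_nat scalerA factS natrM invfM mulrA mulfV ?mul1r //.
Qed.

Lemma step (K : fieldType) (L : lmodType K) (br : L -> L -> L) (hbr : lie_bracket br)
  (A Am Bm : nat -> L) (a0 e0 a c : L) (n d i : nat) :
  (0 < n)%N -> (d <= n)%N -> (i <= d)%N ->
  (forall j, (j <= d.+1)%N -> Bm j = Am j + mono d a j + mono d.+1 c j) ->
  LieD br (fun j => A j + mono n a0 j + mono n.+1 e0 j) Bm i =
  LieD br A Am i + (if i.+1 == d then a *+ d else 0)
   + (if i == d then c *+ d.+1 + br (A 0%N) a else 0)
   + (if (n <= i)%N then br a0 (Am (i - n)%N) else 0).
Proof.
move=> hn hdn hid hB.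
rewrite /LieD /tderiv hB //.
have -> : tbr br (fun j => A j + mono n a0 j + mono n.+1 e0 j) Bm i =
   tbr br (fun j => A j + mono n a0 j + mono n.+1 e0 j) (fun j => Am j + mono d a j + mono d.+1 c j) i.
  apply: tbr_ext => // j hj; apply: hB; apply: leq_trans hj (leq_trans hid _); exact: leqnSn.
rewrite !(tbrDl hbr) !(tbrDr hbr) !(tbr_monol hbr) !(tbr_monor hbr).
have -> : (d < i)%N = false by apply/negbTE; rewrite -leqNgt.
have -> : (n < i)%N = false by apply/negbTE; rewrite -leqNgt; exact: leq_trans hid hdn.
rewrite /mono !addr0.
case: (leqP n i) => hni.
  have ei : i = n by lia.
  have ed : d = n by lia.
  subst i d; rewrite subnn eqxx leqnn.
  have -> : (0 == n) = false by apply/negbTE; rewrite eq_sym -lt0n.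
  have -> : (n.+1 == n) = false by apply/negbTE; rewrite neq_ltn ltnSn orbT.
  rewrite (br0r hbr) !addr0 mulrnDl eqxx !addrA; congr (_ + _ + _); exact: addrAC.
case: (eqVneq i d) => [eid|nid].
  subst i. rewrite subnn eqxx leqnn.
  have -> : (d.+1 == d) = false by apply/negbTE; rewrite neq_ltn ltnSn orbT.
  rewrite !addr0 ?add0r mulrnDl !addrA.
  by rewrite (addrAC (Am d.+1 *+ d.+1)).
have -> : (d <= i)%N = false by lia.
rewrite eqSS (negbTE nid) !addr0.
case: eqP => [<-|_]; last by rewrite !addr0.
by rewrite mulrnDl addrAC.
Qed.

Definition af (K : fieldType) (L : lmodType K) (n : nat) (Delta : L) (m : nat) : L :=
  (((n - m)`!)%:R : K)^-1 *: Delta.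
Definition cf (K : fieldType) (L : lmodType K) (br : L -> L -> L) (n : nat) (A : nat -> L)
  (Delta E : L) (m : nat) : L :=
  ((((n - m).+1)`!)%:R : K)^-1 *: (E + br (A 0%N) Delta *+ m.-1).

Lemma inv (K : fieldType) (L : lmodType K) (br : L -> L -> L) (hbr : lie_bracket br)
  (hK : [pchar K] =i pred0) (n : nat) (hn : (0 < n)%N) (A : nat -> L) (Delta E : L) m :
  (m <= n)%N -> forall i, (i <= (n - m).+1)%N ->
  LieIter br (fun j => A j + mono n (((n`!)%:R : K)^-1 *: Delta) j
                          + mono n.+1 ((((n.+1)`!)%:R : K)^-1 *: E) j) m i
  = LieIter br A m i + mono (n - m) (af n Delta m) i + mono (n - m).+1 (cf br n A Delta E m) i.
Proof.
elim: m => [|m IH] hm i hi.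
  by rewrite /= /af /cf subn0 mulr0n addr0.
have hmn : (m <= n)%N by apply: ltnW.
rewrite /LieIter iterS -/(LieIter _ _ m).
rewrite (@step _ _ br hbr A (LieIter br A m) _ _ _ (af n Delta m) (cf br n A Delta E m)
           n (n - m) i hn (leq_subr _ _) _ (IH hmn)); last by lia.
have e : (n - m = (n - m.+1).+1)%N by lia.
have hin : (i <= n - m)%N by lia.
rewrite /af /cf e in hin *; set d := (n - m.+1)%N in e hin *.
rewrite eqSS /mono !(fact_step hK) (brZr hbr).
have [eid|nid] := eqVneq i d.
  have -> : (n <= i)%N = false by lia.
  have -> : (i == d.+1) = false by lia.
  by rewrite !addr0.
have [eid1|nid1] := eqVneq i d.+1; last first.
  have -> : (n <= i)%N = false by lia.
  by rewrite !addr0.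
clearbody d.
have [m0|mpos] := eqVneq m 0%N.
  subst m.
  have hd : n = d.+1 by lia.
  subst i; rewrite -hd leqnn subnn /= addr0.
  rewrite -!addrA; congr (_ + _).
  have h := br_anti hbr (A 0%N) (n`!%:R^-1 *: Delta); rewrite (brZr hbr) in h.
  by rewrite h addr0.
have -> : (n <= i)%N = false by lia.
rewrite addr0 /=.
have -> : br (A 0%N) Delta *+ m = br (A 0%N) Delta *+ m.-1 + br (A 0%N) Delta.
  by rewrite -mulrSr prednK // lt0n.
by rewrite !addr0 -scalerDr addrA.
Qed.

Theorem mainTheorem5 (K : fieldType) (L M : lmodType K)
  (br : L -> L -> L) (res : L -> M) (G : pred M)
  (hK : [pchar K] =i pred0)
  (hbr : lie_bracket br)
  (hres : linear_for *:%R res)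
  (hG : forall (a : K) (u v : M), G u -> G v -> G (a *: u + v))
  (hG0 : G 0)
  (hobs : obstruction br res G)
  (n : nat) (hn : (1 <= n)%N)
  (A : nat -> L) (hA : tdvf_in_F A) (hadm : admissible br res G n A)
  (Delta E : L) (hD : G (res Delta)) :
  let B := fun i => A i + tmono n Delta i + tmono n.+1 E i in
  (forall m : nat, (1 <= m <= n)%N ->
     eqmod_t (n - m).+1 (LieIter br B m)
       (fun i => LieIter br A m i + tmono (n - m) Delta i)) /\
  eqmod_t 1 (LieIter br B n.+1)
    (fun i => LieIter br A n.+1 i + tconst E i + tbr br A (tconst Delta) i *+ n).
Proof.
move=> B; split.
  move=> m /andP[h1 h2] i hi.
  rewrite /B (inv hbr hK hn A Delta E h2); last by lia.
  rewrite /mono.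
  have -> : (i == (n - m).+1) = false by lia.
  by rewrite addr0.
case=> // _.
rewrite /LieIter iterS -/(LieIter _ _ n) /B.
rewrite (@step _ _ br hbr A (LieIter br A n) _ _ _ (af n Delta n) (cf br n A Delta E n)
           n (n - n) 0 hn (leq_subr _ _) _ (inv hbr hK hn A Delta E (leqnn n))) //.
rewrite /af /cf subnn /=.
have -> : (n <= 0)%N = false by lia.
rewrite /tbr big_ord1 /tconst /=.
have f1 : ((1`!)%:R : K)^-1 = 1 by rewrite factS fact0 muln1 invr1.
have f0 : ((0`!)%:R : K)^-1 = 1 by rewrite fact0 invr1.
rewrite f1 ?f0 !scale1r mulr1n !addr0.
rewrite -!addrA -mulrSr prednK //.
Qed.
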